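(* Let $G=T_1^{r_1}\times\cdots\times T_m^{r_m}$, where $T_1,\dots,T_m$ are pairwise non-isomorphic non-abelian finite simple groups and $r_1,\dots,r_m$ are positive integers. Then \[ \gamma^{\mathrm{ss}}_{\mathrm{cp}}(G)\le\max\{\gamma^{\mathrm{ss}}_{\mathrm{cp}}(T_1),\dots,\gamma^{\mathrm{ss}}_{\mathrm{cp}}(T_m)\}. \]
   Context: A factorization $G=A_1\cdots A_k$ (setwise) of a finite group $G$ with each $A_i$ conjugate in $G$ to $A\le G$ is a special solvable cp-factorization if (i) $A$ is solvable, (ii) $N_G(A)=A$, and (iii) for every $\alpha\in\mathrm{Aut}(G)$ there is $g\in G$ with $A^\alpha=A^g$. $\gamma^{\mathrm{ss}}_{\mathrm{cp}}(G)$ is the minimal length of a special solvable cp-factorization of $G$. *)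

(* Defs.v *)
From mathcomp Require Import all_boot all_fingroup all_solvable.
Set Implicit Arguments. Unset Strict Implicit. Unset Printing Implicit Defensive.
Import GroupScope.

Definition has_sscp_fact (gT : finGroupType) (G : {group gT}) (k : nat) : Prop :=
  exists A : {group gT},
    [/\ A \subset G, solvable A, 'N_G(A) = A,
        (forall a, a \in Aut G -> exists2 g, g \in G & a @: A = A :^ g)
      & exists g : 'I_k -> gT,
          (forall i, g i \in G) /\ G :=: \prod_(i < k) (A :^ g i)].

Definition is_gamma_sscp (gT : finGroupType) (G : {group gT}) (n : nat) : Prop :=
  has_sscp_fact G n /\ (forall k, has_sscp_fact G k -> n <= k).

(* Main.v *)
Require Import Defs.
From mathcomp Require Import all_boot all_fingroup all_solvable.
From Stdlib Require Import Classical IndefiniteDescription.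
Set Implicit Arguments. Unset Strict Implicit. Unset Printing Implicit Defensive.
Import GroupScope.

Lemma exists_min_aux (P : nat -> Prop) M n : n <= M -> P n ->
  exists2 m, (P m /\ forall k, P k -> m <= k) & m <= n.
Proof.
elim: M n => [|M IH] n.
  rewrite leqn0 => /eqP -> P0; exists 0 => //; split => // k _.
move=> leM Pn.
have [[k [Pk ltk]]|nok] := classic (exists k, P k /\ k < n).
  have [j [Pj minj] lej] := IH k (leq_trans ltk leM) Pk.
  by exists j => //; apply: leq_trans lej (ltnW ltk).
exists n => //; split => // k Pk; rewrite leqNgt; apply/negP => kn.
by apply: nok; exists k.
Qed.

Lemma exists_min (P : nat -> Prop) M : P M ->
  exists2 n, (P n /\ forall k, P k -> n <= k) & n <= M.
Proof. exact: exists_min_aux (leqnn M). Qed.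

Lemma conj_comm (gT : finGroupType) (w u : gT) : commute w u -> w ^ u = w.
Proof. by move=> c; rewrite conjgE c mulKg. Qed.

Section Prod.
Variables (gT : finGroupType) (I : finType) (N : I -> {group gT}) (G : {group gT}).
Hypothesis defG : \big[dprod/1]_x N x = G.

Lemma cNN x y : x != y -> N x \subset 'C(N y).
Proof.
have defGc := bigdprodWcp defG.
have : \big[cprod/1]_x N x == (\prod_x N x)%G.
  by rewrite defGc bigprodGE (bigcprodWY defGc).
by move/bigcprodYP => H nxy; apply: H.
Qed.

Lemma commNN x y u v : x != y -> u \in N x -> v \in N y -> commute u v.
Proof. by move=> nxy Hu Hv; apply: (centsP (cNN nxy)) u Hu v Hv. Qed.

Lemma sNG x : N x \subset G.
Proof.
rewrite -(bigdprodWY defG); apply: sub_gen.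
by apply: (bigcup_max x).
Qed.

Lemma nNG x : N x <| G.
Proof. have := defG; rewrite (bigD1 x) //= => /dprod_normal2. by case. Qed.

Lemma dprod_uniq (e e' : I -> gT) : (forall y, e y \in N y) ->
  (forall y, e' y \in N y) -> \prod_y e y = \prod_y e' y -> forall y, e y = e' y.
Proof.
move=> He He' Hp y.
have zG : \prod_y e y \in G by rewrite -(bigdprodW defG); apply: mem_prodg.
have [c [Hc Hcp Hu]] := mem_bigdprod defG zG.
by rewrite (Hu e) // (Hu e') // -Hp.
Qed.

Lemma prod_delta (x : I) (z : gT) : \prod_y (if y == x then z else 1) = z.
Proof. by rewrite -big_mkcond big_pred1_eq. Qed.

Lemma TI_NN x y : x != y -> N x :&: N y = 1.
Proof.
move=> nxy; apply/trivgP/subsetP => z /setIP[zx zy]; rewrite inE.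
have := @dprod_uniq (fun w => if w == x then z else 1)
   (fun w => if w == y then z else 1).
rewrite !prod_delta => /(_ _ _ erefl x).
rewrite eqxx (negbTE nxy) => -> //.
  by move=> w; case: eqP => [->|]; rewrite ?group1.
by move=> w; case: eqP => [->|]; rewrite ?group1.
Qed.

Lemma prod_split_seq (r : seq I) (F1 F2 : I -> gT) : uniq r ->
  (forall y, F1 y \in N y) -> (forall y, F2 y \in N y) ->
  \prod_(y <- r) (F1 y * F2 y) = \prod_(y <- r) F1 y * \prod_(y <- r) F2 y.
Proof.
move=> + H1 H2; elim: r => [|y r IH] /=; first by rewrite !big_nil mulg1.
case/andP => yr ur; rewrite !big_cons IH // -!mulgA; congr (_ * _).
rewrite !mulgA; congr (_ * _).
rewrite big_seq; apply: commute_prod => i ir.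
apply: commNN (H2 y) (H1 i).
by apply: contraNneq yr => ->.
Qed.

Lemma prod_split (F1 F2 : I -> gT) :
  (forall y, F1 y \in N y) -> (forall y, F2 y \in N y) ->
  \prod_y (F1 y * F2 y) = \prod_y F1 y * \prod_y F2 y.
Proof. by apply: prod_split_seq; apply: index_enum_uniq. Qed.

Lemma prod_exchange M (v : I -> nat -> gT) : (forall x k, v x k \in N x) ->
  \prod_x \prod_(k < M) v x k = \prod_(k < M) \prod_x v x k.
Proof.
move=> Hv; elim: M => [|M IH].
  by rewrite big_ord0 big1 // => x _; rewrite big_ord0.
rewrite big_ord_recr /= -IH -prod_split //.
  by apply: eq_bigr => x _; rewrite big_ord_recr.
by move=> y; apply: group_prod.
Qed.

Lemma conj_prod_seq (r : seq I) x w (F : I -> gT) : uniq r -> w \in N x ->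
  (forall y, F y \in N y) ->
  w ^ (\prod_(y <- r) F y) = if x \in r then w ^ F x else w.
Proof.
move=> + + HF; elim: r w => [|y r IH] w /=; first by rewrite big_nil conjg1.
case/andP => yr ur wx; rewrite big_cons conjgM in_cons.
case: (eqVneq x y) => [exy|nxy] /=.
  subst y; rewrite IH ?(negbTE yr) //; exact: groupJ.
rewrite [w ^ F y]conj_comm; first exact: IH.
exact: commNN nxy wx (HF y).
Qed.

Lemma conj_prod_N x w (F : I -> gT) : w \in N x -> (forall y, F y \in N y) ->
  w ^ (\prod_y F y) = w ^ F x.
Proof.
by move=> wx HF; rewrite (@conj_prod_seq _ x) ?index_enum_uniq ?mem_index_enum.
Qed.

End Prod.
Lemma aut_N (gT : finGroupType) (I : finType) (N : I -> {group gT}) (G : {group gT})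
  (defG : \big[dprod/1]_x N x = G) (f : {morphism G >-> gT}) x :
  'injm f -> f @* G = G -> (forall y, simple (N y)) -> ~~ abelian (N x) ->
  exists y, f @* N x = N y.
Proof.
move=> injf imf simN nabN.
have sNxG := sNG defG x.
have iso : N x \isog f @* N x by apply: sub_isog.
have nKG : f @* N x <| G by have := morphim_normal f (nNG defG x); rewrite imf.
have simK : simple (f @* N x) by rewrite -(isog_simple iso).
have [y Hy|allc] := pickP (fun y => ~~ (f @* N x \subset 'C(N y))); last first.
  exfalso; move/negP: nabN; apply; rewrite (isog_abelian iso).
  have sKG : f @* N x \subset G by case/andP: nKG.
  have cGK : G \subset 'C(f @* N x).
    apply: subset_trans (_ : << \bigcup_y N y >> \subset _); first by rewrite (bigdprodWY defG).
    rewrite gen_subG; apply/bigcupsP => y _.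
    by rewrite centsC; move/negbFE: (allc y).
  by rewrite /abelian (subset_trans sKG cGK).
exists y.
have nyG := nNG defG y.
have sNyG := sNG defG y.
have nt : [~: f @* N x, N y] != 1 by apply/eqP => /commG1P; apply/negP.
have sub1 : [~: f @* N x, N y] \subset f @* N x :&: N y.
  rewrite subsetI commg_subl commg_subr.
  by rewrite (subset_trans sNyG (normal_norm nKG)) (subset_trans (normal_sub nKG) (normal_norm nyG)).
have ntI : f @* N x :&: N y != 1.
  apply: contraNneq nt => e; apply/eqP/trivgP; by rewrite -e.
have [_ HK] := simpleP _ simK.
have [_ HN] := simpleP _ (simN y).
have e1 : (f @* N x :&: N y)%G = f @* N x :> {set gT}.
  case: (HK (f @* N x :&: N y)%G) => //=.
    by apply: (normalGI _ nyG); case/andP: nKG.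
  by move=> e; rewrite e eqxx in ntI.
have e2 : (N y :&: f @* N x)%G = N y :> {set gT}.
  case: (HN (N y :&: f @* N x)%G) => //=.
    exact: (normalGI sNyG nKG).
  by move=> e; rewrite setIC e eqxx in ntI.
by rewrite -[LHS]e1 /= setIC -[RHS]e2.
Qed.

Lemma core (rT gT : finGroupType) (T B : {group rT}) (D : {group gT})
  (phi1 phi2 : {morphism T >-> gT}) (f : {morphism D >-> gT}) :
  B \subset T -> (forall a, a \in Aut T -> exists2 t, t \in T & a @: B = B :^ t) ->
  'injm phi1 -> 'injm phi2 -> 'injm f -> phi1 @* T \subset D ->
  f @* (phi1 @* T) = phi2 @* T ->
  exists2 h, h \in phi2 @* T & f @* (phi1 @* B) = (phi2 @* B) :^ h.
Proof.
move=> sBT autB inj1 inj2 injf sD eT.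
pose c := (invm inj2 \o (f \o phi1))%g.
have sT : T \subset (f \o phi1) @*^-1 (phi2 @* T).
  rewrite morphpre_comp -sub_morphim_pre // -sub_morphim_pre //.
  by rewrite eT.
pose beta := restrm sT c.
have injb : 'injm beta.
  by apply: injm_restrm; apply: injm_comp (injm_invm inj2); apply: injm_comp.
have imb : beta @* T = T.
  by rewrite morphim_restrm setIid !morphim_comp eT morphim_invm.
have [t tT Ht] := autB _ (Aut_aut injb imb).
rewrite imset_autE // morphim_restrm (setIidPr sBT) !morphim_comp in Ht.
exists (phi2 t); first exact: mem_morphim.
rewrite -morphimJ // -Ht morphim_invmE morphpreK //.
by rewrite -eT !morphimS.
Qed.
Lemma fact_sig (rT : finGroupType) (T : {group rT}) k : has_sscp_fact T k ->
  sigT (fun B : {group rT} => sig (fun t : 'I_k -> rT =>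
     [/\ B \subset T, solvable B, 'N_T(B) = B,
     (forall a, a \in Aut T -> exists2 g, g \in T & a @: B = B :^ g)
     & (forall i, t i \in T) /\ T :=: \prod_(i < k) (B :^ t i)])).
Proof.
move=> H; case: (constructive_indefinite_description _ H) => B HB.
have Hg : exists g : 'I_k -> rT, (forall i, g i \in T) /\ T :=: \prod_(i < k) (B :^ g i).
  by case: HB.
case: (constructive_indefinite_description _ Hg) => t Ht.
by exists B, t; case: HB => *; split.
Qed.

Lemma der_le (gT : finGroupType) (H : {group gT}) k n : k <= n -> H^`(n) \subset H^`(k).
Proof.
move/subnK <-; elim: (n - k) => [|d IH]; first by rewrite add0n.
by rewrite addSn; apply: subset_trans (der_subS _ _) IH.
Qed.

Theorem lemma13 (gT : finGroupType) (G : {group gT}) (m : nat)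
    (r : 'I_m -> nat) (gTs : 'I_m -> finGroupType)
    (T : forall i : 'I_m, {group gTs i})
    (N : {i : 'I_m & 'I_(r i)} -> {group gT}) (gam : 'I_m -> nat) :
  0 < m ->
  (forall i, 0 < r i) ->
  (forall i, simple (T i)) ->
  (forall i, ~~ abelian (T i)) ->
  (forall i j, i != j -> ~~ (T i \isog T j)) ->
  (forall x, N x \isog T (tag x)) ->
  \big[dprod/1]_(x : {i : 'I_m & 'I_(r i)}) N x = G ->
  (forall i, is_gamma_sscp (T i) (gam i)) ->
  exists2 n, is_gamma_sscp G n & n <= \max_(i < m) gam i.
Proof.
move=> _ _ simT nabT nisoT isoN defG gamH.
pose M := \max_(i < m) gam i.
suff HM : has_sscp_fact G M.
  by have [n [Hn minn] le] := exists_min HM; exists n.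
pose X := {i : 'I_m & 'I_(r i)}.
pose cB i := fact_sig (proj1 (gamH i)).
pose B i := projT1 (cB i).
pose t i := proj1_sig (projT2 (cB i)).
have HB i := proj2_sig (projT2 (cB i)).
have sBT i : B i \subset T i by case: (HB i).
have NB i : 'N_(T i)(B i) = B i by case: (HB i).
have autB i : forall a, a \in Aut (T i) -> exists2 g, g \in T i & a @: B i = B i :^ g.
  by case: (HB i).
have tT i k : t i k \in T i by case: (HB i) => _ _ _ _ [H _]; apply: H.
have defT i : T i :=: \prod_(k < gam i) (B i :^ t i k) by case: (HB i) => _ _ _ _ [_ H]; apply: H.
have solB i : solvable (B i) by case: (HB i).
have cpsi (x : X) : {psi : {morphism T (tag x) >-> gT} | 'injm psi && (psi @* T (tag x) == N x)}.
  apply: constructive_indefinite_description.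
  have [f inj im] := isogP (isog_symr (isoN x)).
  by exists f; rewrite inj im eqxx.
pose psi x := proj1_sig (cpsi x).
have injpsi x : 'injm (psi x) by case/andP: (proj2_sig (cpsi x)).
have impsi x : psi x @* T (tag x) = N x by case/andP: (proj2_sig (cpsi x)) => _ /eqP.
pose Ax x := (psi x @* B (tag x))%G.
pose A := (\prod_(x : X) Ax x)%G.
have sAxN x : Ax x \subset N x.
  rewrite /Ax /= -(impsi x); exact: morphimS _ (sBT _).
have cAA x y : x != y -> Ax x \subset 'C(Ax y).
  move=> nxy; apply: subset_trans (sAxN x) _.
  exact: subset_trans (cNN defG nxy) (centS (sAxN y)).
have defAc : \big[cprod/1]_x Ax x = A.
  by apply/eqP/bigcprodYP => x y _ _; apply: cAA.
have defAs : \prod_x Ax x = A := bigcprodW defAc.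
have defAg : (A : {set gT}) = <<\bigcup_x Ax x>> by rewrite /A bigprodGE.
have sAG : A \subset G.
  rewrite -defAs; apply/subsetP => z /prodsgP[c Hc ->]; apply: group_prod => x _.
  exact: (subsetP (sNG defG x)) _ ((subsetP (sAxN x)) _ (Hc x isT)).
have KL x z : z \in A -> z \in N x -> z \in Ax x.
  rewrite -defAs => /prodsgP[e He ->] eN.
  have He1 y : e y \in N y by apply: (subsetP (sAxN y)); apply: He.
  have He2 y : (if y == x then \prod_y e y else 1) \in N y.
    by case: eqP => [->|]; rewrite ?group1.
  have := @dprod_uniq _ _ _ _ defG e _ He1 He2 (esym (prod_delta _ _)) x.
  by rewrite eqxx => <-; apply: He.
have AxA x : Ax x \subset A.
  by rewrite defAg; apply: sub_gen; apply: (bigcup_max x).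
exists A; split => //.
- apply/derivedP.
  have cn x : {n | (Ax x)^`(n) = 1}.
    apply: constructive_indefinite_description; apply/derivedP.
    by rewrite /Ax /= (injm_sol (injpsi x) (sBT _)).
  exists (\max_x sval (cn x)).
  rewrite -(bigcprodW (der_bigcprod _ defAc)).
  apply: big1 => x _; apply/trivgP.
  apply: subset_trans (der_le (Ax x) (leq_bigmax (F := fun y => sval (cn y)) x)) _.
  by rewrite (svalP (cn x)).
- apply/eqP; rewrite eqEsubset; apply/andP; split; last by rewrite subsetI sAG normG.
  apply/subsetP => g /setIP[gG gN].
  move: (gG); rewrite -(bigdprodW defG) => /prodsgP[c Hc Eg].
  rewrite Eg -defAs; apply: mem_prodg => x _.
  have cx : forall y, c y \in N y by move=> y; apply: Hc.
  have cim : c x \in psi x @* T (tag x) by rewrite impsi.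
  have [v vT _ cv] := morphimP cim.
  suff vB : v \in B (tag x) by rewrite cv; apply: mem_morphim.
  rewrite -(NB (tag x)) inE vT /=.
  apply/normP/eqP; rewrite eqEcard cardJg leqnn andbT.
  apply/subsetP => _ /imsetP[b bB ->].
  have bT := subsetP (sBT _) b bB.
  rewrite -(injmK (injpsi x) (sBT _)); apply: mem_morphpre; first exact: groupJ.
  have wAx : psi x b \in Ax x by apply: mem_morphim.
  have wN : psi x b \in N x := subsetP (sAxN x) _ wAx.
  rewrite morphJ // -cv.
  apply: KL; last exact: groupJ.
  rewrite -(conj_prod_N defG wN cx) -Eg memJ_norm //.
  exact: (subsetP (AxA x)).
- move=> a aA.
  pose f := autm aA.
  have injf : 'injm f := injm_autm aA.
  have imf : f @* G = G := im_autm aA.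
  have simN y : simple (N y) by rewrite (isog_simple (isoN y)).
  have nabN y : ~~ abelian (N y) by rewrite (isog_abelian (isoN y)).
  have chy x : {y : X | f @* N x = N y /\ exists h, h \in N y /\ f @* Ax x = Ax y :^ h}.
    apply: constructive_indefinite_description.
    have [y ey] := aut_N defG injf imf simN (nabN x).
    exists y; split => //.
    have sNxG := sNG defG x.
    have etag : tag y = tag x.
      case: (eqVneq (tag y) (tag x)) => [//|ne]; exfalso.
      move/negP: (nisoT _ _ ne); apply.
      apply: isog_trans (isog_symr (isoN y)) _.
      rewrite -ey; apply: isog_trans (isoN x).
      exact: isog_symr (sub_isog sNxG injf).
    rewrite /Ax /=.
    move: (psi y) (injpsi y) (impsi y).
    case: y etag ey => i j /= etag ey; subst i => p injp imp.
    have s1 : psi x @* T (tag x) \subset G by rewrite impsi.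
    have e1 : f @* (psi x @* T (tag x)) = p @* T (tag x) by rewrite impsi imp.
    have [h hT eh] := core (sBT (tag x)) (autB (tag x)) (injpsi x) injp injf s1 e1.
    by exists h; split => //; rewrite -imp.
  pose s x := sval (chy x).
  have es x : f @* N x = N (s x) by case: (svalP (chy x)).
  have chh x : {h | h \in N (s x) /\ f @* Ax x = Ax (s x) :^ h}.
    by apply: constructive_indefinite_description; case: (svalP (chy x)).
  pose h x := sval (chh x).
  have injs : injective s.
    move=> x1 x2 e.
    case: (eqVneq x1 x2) => // ne; exfalso.
    have eN : N x1 :=: N x2.
      apply: (injm_morphim_inj injf (sNG defG x1) (sNG defG x2)).
      by rewrite !es e.
    have := TI_NN defG ne; rewrite -eN setIid => e1.
    by case/simpleP: (simN x1) => ntN _; rewrite e1 eqxx in ntN.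
  have [sinv sK sKV] := injF_bij injs.
  pose H y := h (sinv y).
  have HN y : H y \in N y.
    have sub : N (s (sinv y)) \subset N y by rewrite sKV.
    by case: (svalP (chh (sinv y))) => hN _; apply: (subsetP sub _ hN).
  have eH x : f @* Ax x = Ax (s x) :^ H (s x).
    by rewrite /H sK; case: (svalP (chh x)).
  exists (\prod_y H y).
    by apply: group_prod => y _; apply: (subsetP (sNG defG y)).
  have -> : a @: A = f @* A.
    by rewrite morphimEsub // /f autmE.
  rewrite defAg morphim_gen; last first.
    by apply/bigcupsP => x _; apply: subset_trans (sAxN x) (sNG defG x).
  rewrite -genJ -bigcupJ.
  congr <<_>>.
  rewrite (big_morph (fun B => f @* B) (morphimU f) (morphim0 f)).
  rewrite [RHS](reindex_inj injs) /=.
  apply: eq_bigr => x _; rewrite eH.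
  apply: eq_in_imset => w wA /=.
  by rewrite (conj_prod_N defG (x := s x) (subsetP (sAxN _) _ wA) HN).
- pose tp i (k : nat) := oapp (t i) 1 (insub k : option 'I_(gam i)).
  have tpT i k : tp i k \in T i.
    by rewrite /tp; case: insubP => [j _ _|_] /=; rewrite ?group1 ?tT.
  pose gk (k : 'I_M) := \prod_x psi x (tp (tag x) k).
  have hN x k : psi x (tp (tag x) k) \in N x.
    by rewrite -impsi; apply: mem_morphim; apply: tpT.
  have gkG k : gk k \in G.
    by apply: group_prod => x _; apply: (subsetP (sNG defG x)).
  exists gk; split => //.
  apply/eqP; rewrite eqEsubset; apply/andP; split; last first.
    apply/subsetP => z /prodsgP[c Hc ->]; apply: group_prod => k _.
    exact: (subsetP (conj_subG (gkG k) sAG)) _ (Hc k isT).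
  apply/subsetP => z; rewrite -{1}(bigdprodW defG) => /prodsgP[c Hc ->].
  have cd x : {d : nat -> gTs (tag x) | (forall k, d k \in B (tag x) :^ tp (tag x) k)
      /\ c x = psi x (\prod_(k < M) d k)}.
    apply: constructive_indefinite_description.
    have cim : c x \in psi x @* T (tag x) by rewrite impsi; apply: Hc.
    have [u uT _ cu] := morphimP cim.
    have uT' : u \in \prod_(k < gam (tag x)) B (tag x) :^ t (tag x) k by rewrite -defT.
    case/prodsgP: uT' => d0 Hd0 ud.
    pose F' k := oapp d0 1 (insub k : option 'I_(gam (tag x))).
    exists F'; split.
      move=> k; rewrite /F' /tp; case: insubP => [j _ _|_] /=; last by rewrite group1.
      by apply: Hd0.
    rewrite cu ud; congr (psi x _).
    transitivity (\prod_(k < gam (tag x)) F' k).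
      by apply: eq_bigr => k _; rewrite /F' valK.
    rewrite (big_ord_widen M F' (leq_bigmax (F := gam) (tag x))) big_mkcond.
    by apply: eq_bigr => k _; rewrite /F'; case: ifP => // kg; rewrite insubF.
  pose d x := sval (cd x).
  have dB x k : d x k \in B (tag x) :^ tp (tag x) k by case: (svalP (cd x)) => H _; apply: H.
  have dT x k : d x k \in T (tag x).
    exact: subsetP (conj_subG (tpT _ k) (sBT _)) _ (dB x k).
  have cE x : c x = \prod_(k < M) psi x (d x k).
    by case: (svalP (cd x)) => _ ->; rewrite morph_prod // => k _; apply: dT.
  rewrite (eq_bigr _ (fun x _ => cE x)).
  rewrite (@prod_exchange _ _ _ _ defG M (fun x k => psi x (d x k))); last first.
    by move=> x k; rewrite -impsi; apply: mem_morphim; apply: dT.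
  apply: mem_prodg => k _.
  have ew x : psi x (d x k) = (psi x (d x k) ^ (psi x (tp (tag x) k))^-1) ^ gk k.
    rewrite /gk (conj_prod_N defG (x := x) _ (fun y => hN y k)) ?conjgKV //.
    by apply: groupJ; rewrite ?groupV // -impsi; apply: mem_morphim; apply: dT.
  rewrite (eq_bigr _ (fun x _ => ew x)) -conjg_prod memJ_conjg -defAs.
  apply: mem_prodg => x _.
  rewrite -mem_conjg -morphimJ ?tpT //; apply: mem_morphim; [exact: dT | exact: dB].
Qed.
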